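(* Let $A\in\mathbb{R}^{n\times n}$ be symmetric with all eigenvalues in $[\mu,L]$, where $0<\mu\le L$, let $b\in\mathbb{R}^n$, and let $f(x)=\frac12 x^\top A x-b^\top x$, with unique minimizer $x^*=A^{-1}b$. Fix a step size $0<\eta\le \frac{2}{L+\mu}$, a window length $m\ge 1$, a regularization parameter $\lambda>0$, and an initial point $x_0\in\mathbb{R}^n$. Let $(x_k)_{k\ge0}$ be generated by Anderson-accelerated gradient descent with relaxation parameter $\beta=1$ (described in the context), and assume $\nabla f(x_k)\neq 0$ for the indices considered. Then for every $k\ge 0$, $$\frac{\|\nabla f(x_{k+1})\|}{\|\nabla f(x_k)\|}\le \delta_k(1-\eta\mu),\qquad \delta_k:=\frac{\|\Pi_k\nabla f(x_k)\|}{\|\nabla f(x_k)\|}\le 1,$$ where $\Pi_k=I-U_k(U_k^\top U_k+\lambda I)^{-1}U_k^\top$. Moreover, for every $k\ge0$, $$\|x_{k+1}-x^*\|\le \Big(\prod_{j=0}^{k}\delta_j\Big)(1-\eta\mu)^{k+1}\frac{L}{\mu}\,\|x_0-x^*\|.$$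
   Context: Norms are Euclidean $\ell^2$ norms (operator norm for matrices). Let $G(x)=x-\eta\nabla f(x)$. Anderson-accelerated gradient descent (AA-GD) with $\beta=1$: set $x_1=G(x_0)$; for $k\ge1$, let $m_k=\min\{m,k\}$, let $U_k=[U_{k,k-m_k},\dots,U_{k,k-1}]\in\mathbb{R}^{n\times m_k}$ with columns $U_{k,j}=\nabla f(x_k)-\nabla f(x_j)$, compute the weights $(\alpha^k_{k-m_k},\dots,\alpha^k_{k-1})^\top=(U_k^\top U_k+\lambda I)^{-1}U_k^\top\nabla f(x_k)$ (the minimizer of $\|\nabla f(x_k)-U_k\alpha\|^2+\lambda\|\alpha\|^2$), set $\alpha^k_k=1-\sum_{j=k-m_k}^{k-1}\alpha^k_j$ (so the weights sum to one), and define $x_{k+1}=\sum_{j=k-m_k}^{k}\alpha^k_j G(x_j)$. For $k=0$ the matrix $U_0$ has no columns, so $\Pi_0=I$ and $\delta_0=1$. *)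

(* Defs.v *)
From HB Require Import structures.
From mathcomp Require Import all_boot all_order all_algebra.
From mathcomp Require Import reals.
Set Implicit Arguments. Unset Strict Implicit. Unset Printing Implicit Defensive.
Import Order.TTheory GRing.Theory Num.Theory.
Local Open Scope ring_scope.

Section AAGD.
Variables (R : realType) (n : nat).

Definition norm2 (v : 'cV[R]_n) : R := Num.sqrt (\sum_(i < n) (v i 0) ^+ 2).

Definition quadf (A : 'M[R]_n) (b : 'cV[R]_n) (x : 'cV[R]_n) : R :=
  2^-1 * (x^T *m A *m x) 0 0 - (b^T *m x) 0 0.

(* gradient of f for symmetric A *)
Definition gradf (A : 'M[R]_n) (b : 'cV[R]_n) (x : 'cV[R]_n) : 'cV[R]_n :=
  A *m x - b.

Definition Gmap A b (eta : R) x : 'cV[R]_n := x - eta *: gradf A b x.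

Definition xstar (A : 'M[R]_n) (b : 'cV[R]_n) : 'cV[R]_n := invmx A *m b.

Variables (A : 'M[R]_n) (b : 'cV[R]_n) (eta lam : R) (m : nat).

(* Given the history h (h i = x_i for i <= k), the matrix U_k with columns
   U_{k,j} = grad f(x_k) - grad f(x_j), j = k - m_k, ..., k-1, m_k = minn m k;
   column index j : 'I_(minn m k) corresponds to iterate k - m_k + j. *)
Definition Umat (h : nat -> 'cV[R]_n) (k : nat) : 'M[R]_(n, minn m k) :=
  \matrix_(i < n, j < minn m k)
     (gradf A b (h k) - gradf A b (h (k - minn m k + j)%N)) i 0.

Definition aa_weights (h : nat -> 'cV[R]_n) (k : nat) : 'cV[R]_(minn m k) :=
  invmx ((Umat h k)^T *m Umat h k + lam%:M) *m (Umat h k)^T *m gradf A b (h k).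

Definition aa_next (h : nat -> 'cV[R]_n) (k : nat) : 'cV[R]_n :=
  \sum_(j < minn m k) (aa_weights h k j 0) *: Gmap A b eta (h (k - minn m k + j)%N)
  + (1 - \sum_(j < minn m k) aa_weights h k j 0) *: Gmap A b eta (h k).

(* list [:: x_0; ...; x_k] of AA-GD iterates (for k = 0 the step reduces to
   x_1 = G(x_0) since U_0 has no columns) *)
Fixpoint aa_list (x0 : 'cV[R]_n) (k : nat) : seq 'cV[R]_n :=
  match k with
  | 0 => [:: x0]
  | k'.+1 => let s := aa_list x0 k' in rcons s (aa_next (fun i => nth 0 s i) k')
  end.

Definition aa_seq (x0 : 'cV[R]_n) (k : nat) : 'cV[R]_n := nth 0 (aa_list x0 k) k.

Definition aa_Pi (x0 : 'cV[R]_n) (k : nat) : 'M[R]_n :=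
  let U := Umat (aa_seq x0) k in
  1%:M - U *m invmx (U^T *m U + lam%:M) *m U^T.

Definition aa_delta (x0 : 'cV[R]_n) (k : nat) : R :=
  norm2 (aa_Pi x0 k *m gradf A b (aa_seq x0 k)) / norm2 (gradf A b (aa_seq x0 k)).

End AAGD.

(* Main.v *)
Require Import Defs.
From HB Require Import structures.
From mathcomp Require Import all_boot all_order all_algebra.
From mathcomp Require Import reals.
From mathcomp Require Import complex ring lra zify.

Set Implicit Arguments. Unset Strict Implicit. Unset Printing Implicit Defensive.
Import Order.TTheory GRing.Theory Num.Theory.
Local Open Scope ring_scope.
Section Spec.
Variable R : realType.
Local Notation C := (R[i]).
Local Notation rc := (real_complex R).
Definition toC p q (M : 'M[R]_(p,q)) : 'M[C]_(p,q) := map_mx (real_complex R) M.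
Definition ct p q (M : 'M[C]_(p,q)) : 'M[C]_(q,p) := map_mx Num.conj (M^T).
Definition sqn n (v : 'cV[R]_n) : R := \sum_(i < n) (v i 0) ^+ 2.

Lemma conjR (r : R) : Num.conj (rc r : C) = (rc r).
Proof. exact: conjc_real. Qed.

Lemma ct_mul p q r (X : 'M[C]_(p,q)) (Y : 'M[C]_(q,r)) : ct (X *m Y) = ct Y *m ct X.
Proof. by rewrite /ct trmx_mul map_mxM. Qed.

Lemma ReMr (z : C) (r : R) : complex.Re (z * (rc r)) = complex.Re z * r.
Proof. by case: z => a b /=; rewrite mulr0 subr0. Qed.

Lemma Re_conj_ge0 (z : C) : 0 <= complex.Re (z * Num.conj z).
Proof. case: z => a b /=. rewrite mulrN opprK. by rewrite addr_ge0 // -expr2 sqr_ge0. Qed.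

Lemma Re_sum I (s : seq I) (P : pred I) (F : I -> C) :
  complex.Re (\sum_(i <- s | P i) F i) = \sum_(i <- s | P i) complex.Re (F i).
Proof. by apply: (big_morph (@complex.Re R)) => // [[a b] [c d]]. Qed.

Lemma sqnC n (w : 'cV[R]_n) :
  (rc (sqn w)) = ((toC w)^T *m ct ((toC w)^T)) 0 0.
Proof.
rewrite /sqn rmorph_sum /= !mxE; apply: eq_bigr => i _.
rewrite !mxE conjR expr2. by rewrite -rmorphM.
Qed.


Lemma spec_decomp n (A : 'M[R]_n) : A^T = A ->
  exists (d : 'I_n -> R) (c : 'cV[R]_n -> 'I_n -> R),
   [/\ forall i, eigenvalue A (d i), forall v i, 0 <= c v i &
     forall v (al be : R), sqn ((al%:M + be *: A) *m v)
        = \sum_i c v i * (al + be * d i) ^+ 2 ].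
Proof.
move=> At.
set Ac := toC A.
have herm : Ac \is hermsymmx.
  apply/is_hermitianmxP; rewrite expr0 scale1r; apply/matrixP => i j.
  rewrite !mxE conjR; congr (rc _).
  by have := congr1 (fun M : 'M[R]_n => M i j) At; rewrite mxE => ->.
set P := spectralmx Ac; set D := spectral_diag Ac.
have PU : P \is unitarymx := spectral_unitarymx Ac.
have PtE : invmx P = ct P by rewrite invmx_unitary.
have AcE : Ac = ct P *m diag_mx D *m P.
  by rewrite -PtE; apply/orthomx_spectralP/hermitian_normalmx.
have DE i : D 0 i = rc (complex.Re (D 0 i)).
  by rewrite RRe_real //; apply: (mxOverP (hermitian_spectral_diag_real herm)).
have PPt : P *m ct P = 1%:M by apply/unitarymxP.
have PtP : ct P *m P = 1%:M by rewrite -PtE mulVmx // spectral_unit.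
exists (fun i => complex.Re (D 0 i)).
exists (fun v i => complex.Re (((toC v)^T *m ct P) 0 i * Num.conj (((toC v)^T *m ct P) 0 i))).
split.
- move=> i; rewrite /eigenvalue /eigenspace kermx_eq0 /row_free.
  rewrite -(mxrank_map (real_complex R)) map_mxB map_scalar_mx /= -/(toC A) -/Ac -DE.
  rewrite -/(row_free _); apply/negP => rf.
  pose v : 'rV[C]_n := delta_mx 0 i *m P.
  have vA : v *m (Ac - (D 0 i)%:M) = 0.
    rewrite mulmxBr mul_mx_scalar AcE /v !mulmxA -(mulmxA _ P) PPt mulmx1.
    have -> : delta_mx 0 i *m diag_mx D = D 0 i *: delta_mx (0 : 'I_1) i.
      apply/matrixP => a b; rewrite !mxE (bigD1 b) //= big1 ?addr0; last first.
        by move=> k /negbTE kb; rewrite !mxE kb mulr0n mulr0.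
      rewrite !mxE ord1 eqxx /=; case: eqP => [->|_] /=; rewrite ?eqxx ?mulr1n ?mulr0n ?mulr1 ?mul1r ?mulr0 ?mul0r //.
    by rewrite -scalemxAl subrr.
  move/eqP: vA; rewrite (mulmx_free_eq0 _ rf) /v (mulmx_free_eq0 _ _); last first.
    by rewrite row_free_unit spectral_unit.
  apply/negP; apply/negP => /eqP/matrixP/(_ 0 i); rewrite !mxE !eqxx /=.
  by move/eqP; rewrite oner_eq0.
- by move=> v i; apply: Re_conj_ge0.
move=> v al be.
pose q : 'rV[C]_n := \row_j rc (al + be * complex.Re (D 0 j)).
have dq : diag_mx q = (rc al)%:M + rc be *: diag_mx D.
  apply/matrixP=> a b; rewrite !mxE; case: eqP => [->|_] /=.
    by rewrite !mulr1n rmorphD rmorphM /= -DE.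
  by rewrite !mulr0n mulr0 addr0.
have ME : toC (al%:M + be *: A) = ct P *m diag_mx q *m P.
  rewrite /toC map_mxD map_scalar_mx map_mxZ /= -/(toC A) -/Ac AcE dq.
  by rewrite mulmxDr mulmxDl mul_mx_scalar -scalemxAl PtP scalemx1 -scalemxAr -scalemxAl.
have Msym : (al%:M + be *: A)^T = al%:M + be *: A.
  by rewrite linearD linearZ /= tr_scalar_mx At.
set y := (toC v)^T.
have key : rc (sqn ((al%:M + be *: A) *m v))
    = \sum_i ((y *m ct P) 0 i * Num.conj ((y *m ct P) 0 i)) * rc ((al + be * complex.Re (D 0 i)) ^+ 2).
  have tT : (toC (al%:M + be *: A))^T = toC (al%:M + be *: A) by rewrite /toC map_trmx Msym.
  rewrite sqnC /toC map_mxM -/(toC _) -/(toC v) trmx_mul tT ME -/y.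
  set Z := y *m ct P *m diag_mx q.
  have -> : y *m (ct P *m diag_mx q *m P) = Z *m P by rewrite /Z !mulmxA.
  rewrite ct_mul mulmxA -(mulmxA Z) PPt mulmx1 mxE.
  apply: eq_bigr => j _. set u := y *m ct P. rewrite /Z -/u mul_mx_diag /ct !mxE rmorphM /= conjR rmorphXn /=.
  ring.
have := congr1 (@complex.Re R) key; rewrite /= Re_sum => ->.
by apply: eq_bigr => j _; rewrite ReMr.
Qed.
End Spec.
Section Gen.
Variable R : realType.

Lemma norm2E n (v : 'cV[R]_n) : norm2 v = Num.sqrt (sqn v).
Proof. by []. Qed.

Lemma sqn_ge0 n (v : 'cV[R]_n) : 0 <= sqn v.
Proof. by apply: sumr_ge0 => i _; apply: sqr_ge0. Qed.

Lemma sqnE n (v : 'cV[R]_n) : sqn v = (v^T *m v) 0 0.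
Proof. by rewrite /sqn mxE; apply: eq_bigr => i _; rewrite mxE expr2. Qed.

Lemma sqn_eq0 n (v : 'cV[R]_n) : sqn v = 0 -> v = 0.
Proof.
move=> h; apply/matrixP => i j; rewrite ord1 mxE.
have := @psumr_eq0P _ _ xpredT (fun i => v i 0 ^+ 2) (fun i _ => sqr_ge0 _) h i isT.
by move/eqP; rewrite sqrf_eq0 => /eqP.
Qed.

Lemma norm2_ge0 n (v : 'cV[R]_n) : 0 <= norm2 v.
Proof. exact: sqrtr_ge0. Qed.

Lemma norm2_le n p (v : 'cV[R]_n) (w : 'cV[R]_p) K :
  0 <= K -> sqn w <= K ^+ 2 * sqn v -> norm2 w <= K * norm2 v.
Proof.
move=> K0 h; rewrite !norm2E -[K]ger0_norm // -sqrtr_sqr -sqrtrM ?sqr_ge0 //.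
by rewrite ler_sqrt // mulr_ge0 ?sqr_ge0 ?sqn_ge0.
Qed.

Lemma norm2_ge n p (v : 'cV[R]_n) (w : 'cV[R]_p) K :
  0 <= K -> K ^+ 2 * sqn v <= sqn w -> K * norm2 v <= norm2 w.
Proof.
move=> K0 h; rewrite !norm2E -[K]ger0_norm // -sqrtr_sqr -sqrtrM ?sqr_ge0 //.
by rewrite ler_sqrt // sqn_ge0.
Qed.

Lemma unit_of_inj n (M : 'M[R]_n) :
  (forall v : 'rV_n, v *m M = 0 -> v = 0) -> M \in unitmx.
Proof.
move=> h; rewrite -row_free_unit -kermx_eq0; apply/eqP/row_matrixP => i.
by rewrite row0; apply: h; rewrite -row_mul mulmx_ker row0.
Qed.

Lemma scalar0 n : (0 : R)%:M = 0 :> 'M[R]_n.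
Proof. by apply/matrixP => i j; rewrite !mxE mul0rn. Qed.

Section Sym.
Variables (n : nat) (A : 'M[R]_n) (mu L : R).
Hypotheses (At : A^T = A) (hev : forall a : R, eigenvalue A a -> mu <= a <= L).

Lemma sym_up al be K v : 0 <= K ->
  (forall d, mu <= d <= L -> (al + be * d) ^+ 2 <= K ^+ 2) ->
  norm2 ((al%:M + be *: A) *m v) <= K * norm2 v.
Proof.
move=> K0 hd; have [d [c [eig cnn E]]] := spec_decomp At.
apply: norm2_le => //.
have -> : sqn v = sqn ((1%:M + 0 *: A) *m v) by rewrite scale0r addr0 mul1mx.
rewrite !E mulr_sumr; apply: ler_sum => i _.
rewrite mul0r addr0 expr1n mulr1 mulrC; apply: ler_wpM2r; first exact: cnn.
exact/hd/hev/eig.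
Qed.

Lemma sym_lo al be K v : 0 <= K ->
  (forall d, mu <= d <= L -> K ^+ 2 <= (al + be * d) ^+ 2) ->
  K * norm2 v <= norm2 ((al%:M + be *: A) *m v).
Proof.
move=> K0 hd; have [d [c [eig cnn E]]] := spec_decomp At.
apply: norm2_ge => //.
have -> : sqn v = sqn ((1%:M + 0 *: A) *m v) by rewrite scale0r addr0 mul1mx.
rewrite !E mulr_sumr; apply: ler_sum => i _.
  rewrite mul0r addr0 expr1n mulr1 mulrC; apply: ler_wpM2l; first exact: cnn.
exact/hd/hev/eig.
Qed.
End Sym.

Lemma scD p q (X Y : 'M[R]_(p.+1,q.+1)) : (X + Y) 0 0 = X 0 0 + Y 0 0.
Proof. by rewrite mxE. Qed.
Lemma scB p q (X Y : 'M[R]_(p.+1,q.+1)) : (X - Y) 0 0 = X 0 0 - Y 0 0.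
Proof. by rewrite !mxE. Qed.
Lemma scZ p q (c : R) (X : 'M[R]_(p.+1,q.+1)) : (c *: X) 0 0 = c * X 0 0.
Proof. by rewrite mxE. Qed.
Lemma scT (X : 'M[R]_1) : X^T 0 0 = X 0 0.
Proof. by rewrite mxE. Qed.

Lemma Pi_contr n p (U : 'M[R]_(n,p)) (lam : R) (g : 'cV[R]_n) : 0 < lam ->
  norm2 ((1%:M - U *m invmx (U^T *m U + lam%:M) *m U^T) *m g) <= norm2 g.
Proof.
move=> lam0; set M := U^T *m U + lam%:M.
have Mu : M \in unitmx.
  apply: unit_of_inj => v hv.
  have e : (v *m M *m v^T) 0 0 = sqn (U *m v^T) + lam * sqn v^T.
    rewrite !sqnE trmx_mul !trmxK /M mulmxDr mulmxDl mul_mx_scalar -scalemxAl scD scZ.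
    by rewrite !mulmxA.
  move: e; rewrite hv mul0mx mxE => /esym e.
  have h1 := sqn_ge0 (U *m v^T); have h2 := sqn_ge0 v^T.
  have : lam * sqn v^T = 0 by nra.
  move/eqP; rewrite mulf_eq0 gt_eqF //= => /eqP /sqn_eq0 vT0.
  by rewrite -[v]trmxK vT0 trmx0.
set a := invmx M *m (U^T *m g).
have PiE : (1%:M - U *m invmx M *m U^T) *m g = g - U *m a.
  by rewrite mulmxBl mul1mx /a !mulmxA.
have Ma : M *m a = U^T *m g by rewrite /a mulKVmx.
rewrite PiE -[norm2 g]mul1r; apply: norm2_le => //; rewrite expr1n mul1r.
have E1 : sqn (g - U *m a) = sqn g - 2 * (a^T *m (U^T *m g)) 0 0 + sqn (U *m a).
  rewrite !sqnE linearB /= !scB [(g - U *m a)^T]linearB /= !mulmxBl !scB.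
  have -> : (g^T *m (U *m a)) 0 0 = (a^T *m (U^T *m g)) 0 0.
    by rewrite -[LHS]scT !trmx_mul !trmxK !mulmxA.
  have -> : ((U *m a)^T *m g) 0 0 = (a^T *m (U^T *m g)) 0 0.
    by rewrite trmx_mul mulmxA.
  ring.
have E2 : (a^T *m (U^T *m g)) 0 0 = sqn (U *m a) + lam * sqn a.
  rewrite -Ma /M mulmxDl mulmxDr mul_scalar_mx -scalemxAr scD scZ !sqnE [(U *m a)^T]trmx_mul.
  by rewrite !mulmxA.
rewrite E1 E2.
have := sqn_ge0 (U *m a); have := sqn_ge0 a; nra.
Qed.

Section AA.
Variables (n : nat) (A : 'M[R]_n) (b : 'cV[R]_n) (eta lam : R) (m : nat).
Local Notation gr := (gradf A b).
Local Notation nx := (aa_next A b eta lam m).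
Local Notation Um := (Umat A b m).

Lemma size_aa_list x0 k : size (aa_list A b eta lam m x0 k) = k.+1.
Proof. by elim: k => //= k IH; rewrite size_rcons IH. Qed.

Lemma aa_seq_nth x0 k i : (i <= k)%N ->
  aa_seq A b eta lam m x0 i = nth 0 (aa_list A b eta lam m x0 k) i.
Proof.
elim: k => [|k IH]; first by rewrite leqn0 => /eqP ->.
rewrite leq_eqVlt => /orP [/eqP -> //|ik].
by rewrite /= nth_rcons size_aa_list ik IH.
Qed.

Lemma aa_next_ext h h' k : (forall i, (i <= k)%N -> h i = h' i) -> nx h k = nx h' k.
Proof.
move=> E.
have Ej (j : 'I_(minn m k)) : h (k - minn m k + j)%N = h' (k - minn m k + j)%N.
  by apply: E; have := ltn_ord j; lia.
have Ek : h k = h' k by apply: E.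
have EU : Um h k = Um h' k by apply/matrixP => i j; rewrite !mxE Ej Ek.
have EW : aa_weights A b lam m h k = aa_weights A b lam m h' k.
  by rewrite /aa_weights EU Ek.
rewrite /aa_next EW Ek; congr (_ + _).
by apply: eq_bigr => j _; rewrite Ej.
Qed.

Lemma aa_seq_S x0 k :
  aa_seq A b eta lam m x0 k.+1 = nx (aa_seq A b eta lam m x0) k.
Proof.
rewrite /aa_seq /= nth_rcons size_aa_list ltnn eqxx.
by apply: aa_next_ext => i ik; rewrite -aa_seq_nth.
Qed.

Definition PiM h k : 'M[R]_n :=
  1%:M - Um h k *m invmx ((Um h k)^T *m Um h k + lam%:M) *m (Um h k)^T.

Lemma AG x : A *m Gmap A b eta x - b = (1%:M - eta *: A) *m gr x.
Proof.
rewrite /Gmap {1}/gradf mulmxBl mul1mx -scalemxAl mulmxBr -scalemxAr.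
by rewrite addrAC.
Qed.

Lemma grad_next h k :
  gr (nx h k) = (1%:M - eta *: A) *m (PiM h k *m gr (h k)).
Proof.
set N := minn m k.
set al := aa_weights A b lam m h k.
set G := Gmap A b eta.
have nxE : nx h k = G (h k) + \sum_(j < N) al j 0 *: (G (h (k - N + j)%N) - G (h k)).
  rewrite /aa_next -/N -/al -/G scalerBl scale1r scaler_suml.
  under [X in _ = _ + X]eq_bigr do rewrite scalerBr.
  by rewrite sumrB addrCA.
have UaE : Um h k *m al = \sum_(j < N) al j 0 *: (gr (h k) - gr (h (k - N + j)%N)).
  apply/matrixP => i j; rewrite ord1 !mxE summxE; apply: eq_bigr => l _.
  by rewrite !mxE mulrC.
have PiE : PiM h k *m gr (h k) = gr (h k) + \sum_(j < N) al j 0 *: (gr (h (k - N + j)%N) - gr (h k)).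
  rewrite /PiM mulmxBl mul1mx -!mulmxA (mulmxA (invmx _)) -/al. 
  rewrite UaE -sumrN; congr (_ + _); apply: eq_bigr => j _.
  by rewrite -scalerN opprB.
rewrite PiE mulmxDr mulmx_sumr /gradf nxE mulmxDr mulmx_sumr addrAC -/(gradf A b (G (h k))).
rewrite -/(gradf A b (h k)).
rewrite [in LHS]/gradf AG; congr (_ + _); apply: eq_bigr => j _.
rewrite -!scalemxAr mulmxBr; congr (_ *: _).
have -> : A *m h (k - N + j)%N - b = gr (h (k - N + j)%N) by []. rewrite [RHS]mulmxBr -!AG.
by rewrite opprB addrA subrK.
Qed.
End AA.

Lemma norm2_eq0 n (v : 'cV[R]_n) : norm2 v <= 0 -> v = 0.
Proof.
rewrite norm2E => h; apply: sqn_eq0; apply/eqP; rewrite eq_le sqn_ge0 andbT.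
by rewrite -sqrtr_eq0 eq_le h sqrtr_ge0.
Qed.

Lemma norm20 n : norm2 (0 : 'cV[R]_n) = 0.
Proof.
rewrite norm2E /sqn big1 ?sqrtr0 // => i _; by rewrite mxE expr0n.
Qed.
End Gen.

Unset Implicit Arguments.

Theorem theorem3p1 (R : realType) (n : nat) (A : 'M[R]_n) (b : 'cV[R]_n)
    (mu L eta lam : R) (m : nat) (x0 : 'cV[R]_n) :
  A^T = A ->
  0 < mu -> mu <= L ->
  (forall a : R, eigenvalue A a -> mu <= a <= L) ->
  0 < eta -> eta <= 2 / (L + mu) ->
  (1 <= m)%N ->
  0 < lam ->
  let x := aa_seq A b eta lam m x0 in
  let g := fun k => gradf A b (x k) in
  let delta := aa_delta A b eta lam m x0 in
  (forall k : nat, g k != 0 ->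
     norm2 (g k.+1) / norm2 (g k) <= delta k * (1 - eta * mu)
     /\ delta k <= 1)
  /\
  (forall k : nat, (forall j : nat, (j <= k)%N -> g j != 0) ->
     norm2 (x k.+1 - xstar A b)
       <= (\prod_(j < k.+1) delta j) * (1 - eta * mu) ^+ k.+1 * (L / mu)
          * norm2 (x0 - xstar A b)).
Proof.
move=> At mu0 muL hev eta0 etaLe m1 lam0 x g delta.
have Lmu0 : 0 < L + mu by lra.
have etaLe' : eta * (L + mu) <= 2 by rewrite -ler_pdivlMr.
set c := 1 - eta * mu.
have c0 : 0 <= c by rewrite /c; nra.
have HB v : norm2 ((1%:M - eta *: A) *m v) <= c * norm2 v.
  have -> : 1%:M - eta *: A = 1%:M + (- eta) *: A by rewrite scaleNr.
  apply: (sym_up At hev) => // d /andP [d1 d2].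
  have f1 : 0 <= c - (1 + - eta * d) by rewrite /c; nra.
  have f2 : 0 <= c + (1 + - eta * d) by rewrite /c; nra.
  nra.
have HAlo v : mu * norm2 v <= norm2 (A *m v).
  have -> : A *m v = ((0:R)%:M + 1 *: A) *m v by rewrite scalar0 add0r scale1r.
  apply: (sym_lo At hev); first lra.
  move=> d /andP [d1 d2]; nra.
have HAhi v : norm2 (A *m v) <= L * norm2 v.
  have -> : A *m v = ((0:R)%:M + 1 *: A) *m v by rewrite scalar0 add0r scale1r.
  apply: (sym_up At hev); first lra.
  move=> d /andP [d1 d2]; nra.
have Au : A \in unitmx.
  apply: unit_of_inj => v hv.
  have e : A *m v^T = 0 by rewrite -{1}At -trmx_mul hv trmx0.
  have := HAlo v^T; rewrite e norm20 => h.
  have : norm2 v^T <= 0 by nra.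
  by move/norm2_eq0 => vT0; rewrite -[v]trmxK vT0 trmx0.
have hstep k : g k.+1 = (1%:M - eta *: A) *m (aa_Pi A b eta lam m x0 k *m g k).
  by rewrite /g /x aa_seq_S grad_next.
have hP k : norm2 (aa_Pi A b eta lam m x0 k *m g k) <= norm2 (g k).
  by rewrite /aa_Pi /=; apply: Pi_contr.
have gpos k : g k != 0 -> 0 < norm2 (g k).
  move=> gk; rewrite lt_neqAle norm2_ge0 andbT eq_sym; apply/negP => /eqP h.
  by move/eqP: gk; apply; apply: norm2_eq0; rewrite h.
have hdel k : g k != 0 -> delta k * norm2 (g k) = norm2 (aa_Pi A b eta lam m x0 k *m g k).
  move=> gk; rewrite /delta /aa_delta divfK //; by rewrite gt_eqF ?gpos.
have del0 k : 0 <= delta k.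
  by rewrite /delta /aa_delta divr_ge0 // norm2_ge0.
have one k : g k != 0 -> norm2 (g k.+1) <= delta k * c * norm2 (g k).
  move=> gk; rewrite mulrAC hdel // hstep mulrC; exact: HB.
split.
  move=> k gk; split.
    by rewrite ler_pdivrMr ?gpos // one.
  by rewrite /delta /aa_delta ler_pdivrMr ?gpos // mul1r.
move=> K hg.
have ind j : (j <= K.+1)%N ->
    norm2 (g j) <= (\prod_(i < j) delta i) * c ^+ j * norm2 (g 0%N).
  elim: j => [_|j IH jK]; first by rewrite big_ord0 expr0 !mul1r.
  have gj : g j != 0 by apply: hg.
  apply: (le_trans (one j gj)).
  rewrite big_ord_recr /= exprS.
  have := IH (ltnW jK); have := del0 j.
  have := norm2_ge0 (g j).
  have P0 : 0 <= \prod_(i < j) delta i by apply: prodr_ge0 => i _.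
  have cj : 0 <= c ^+ j by apply: exprn_ge0.
  move: (\prod_(i < j) delta i) P0 (c ^+ j) cj => P P0 cJ cj.
  move=> h1 h2 h3.
  have := ler_wpM2l (mulr_ge0 h2 c0) h3.
  move=> h4; apply: (le_trans h4); rewrite le_eqVlt; apply/orP; left; apply/eqP; ring.
have eK : A *m (x K.+1 - xstar A b) = g K.+1.
  by rewrite mulmxBr /xstar mulmxA mulmxV // mul1mx.
have e0 : A *m (x0 - xstar A b) = g 0%N.
  by rewrite mulmxBr /xstar mulmxA mulmxV // mul1mx.
have h1 := HAlo (x K.+1 - xstar A b); rewrite eK in h1.
have h2 := ind K.+1 (leqnn _).
have h3 := HAhi (x0 - xstar A b); rewrite e0 in h3.
have P0 : 0 <= \prod_(i < K.+1) delta i by apply: prodr_ge0 => i _.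
have cK : 0 <= c ^+ K.+1 by apply: exprn_ge0.
move: (\prod_(i < K.+1) delta i) P0 (c ^+ K.+1) cK h2 => P P0 cJ cj h2.
have -> : P * cJ * (L / mu) * norm2 (x0 - xstar A b) = (P * cJ * L * norm2 (x0 - xstar A b)) / mu.
  by rewrite mulrA [in RHS]mulrAC -!mulrA.
rewrite ler_pdivlMr // mulrC.
apply: (le_trans h1); apply: (le_trans h2).
rewrite -!mulrA; apply: ler_wpM2l => //; apply: ler_wpM2l => //.
Qed.
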